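(* Work in $\mathrm{IKP}$. For any set $x$, if (1) every $\beta \in x$ satisfies $\beta \in \mathrm{PlOrd}$, and (2) for every $\gamma \in \mathrm{PlOrd}$, if $\gamma \subseteq \beta$ for some $\beta \in x$ then $\gamma \in x$, then $x \in \mathrm{PlOrd}$.
   Context: $\mathrm{IKP}$ is intuitionistic Kripke–Platek set theory (with strong infinity). An ordinal is a transitive set of transitive sets. For sets $\alpha,\gamma$, write $\mathrm{relpl}_\alpha(\gamma)$ for the formula $\forall \delta \in \gamma\ \forall \varepsilon \in \alpha\,(\varepsilon \subseteq \delta \rightarrow \varepsilon \in \gamma)$. $\mathrm{PlOrd}$ is the class of ordinals $\alpha$ such that for all $\beta \in \alpha$ and all $\gamma \subseteq \beta$ with $\mathrm{relpl}_\alpha(\gamma)$, we have $\gamma \in \alpha$ and $\forall \delta \in \alpha\,(\beta \in \delta \rightarrow \gamma \in \delta)$. Elements of $\mathrm{PlOrd}$ are called plump ordinals. *)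

(* Defs.v *)
(* IKP is rendered semantically: a structure (M, mem) whose membership relation
   is Prop-valued (Rocq's logic is intuitionistic), satisfying the axioms of
   intuitionistic Kripke-Platek set theory with strong infinity.  Axiom schemas
   are stated for a deep embedding of first-order formulas of the language {∈,=}
   (bounded = Δ0 formulas for separation/collection, arbitrary formulas for set
   induction). *)

(* Formulas with de Bruijn variables. *)
Inductive form : Type :=
| f_mem : nat -> nat -> form
| f_eq  : nat -> nat -> form
| f_bot : form
| f_and : form -> form -> form
| f_or  : form -> form -> form
| f_imp : form -> form -> form
| f_all : form -> form
| f_ex  : form -> form
| f_ball : nat -> form -> form          (* ∀ v0 ∈ var i (i read outside the binder), A *)
| f_bex  : nat -> form -> form.

Fixpoint delta0 (A : form) : Prop :=
  match A with
  | f_mem _ _ | f_eq _ _ | f_bot => True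
  | f_and B C | f_or B C | f_imp B C => delta0 B /\ delta0 C
  | f_all _ | f_ex _ => False
  | f_ball _ B | f_bex _ B => delta0 B
  end.

Definition scons {M : Type} (a : M) (e : nat -> M) : nat -> M :=
  fun n => match n with 0 => a | S k => e k end.

Fixpoint eval {M : Type} (mem : M -> M -> Prop) (e : nat -> M) (A : form) : Prop :=
  match A with
  | f_mem i j => mem (e i) (e j)
  | f_eq i j => e i = e j
  | f_bot => False
  | f_and B C => eval mem e B /\ eval mem e C
  | f_or B C => eval mem e B \/ eval mem e C
  | f_imp B C => eval mem e B -> eval mem e C
  | f_all B => forall y, eval mem (scons y e) B
  | f_ex B => exists y, eval mem (scons y e) B
  | f_ball i B => forall y, mem y (e i) -> eval mem (scons y e) B
  | f_bex i B => exists y, mem y (e i) /\ eval mem (scons y e) B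
  end.

Definition is_empty {M : Type} (mem : M -> M -> Prop) (z : M) := forall y, ~ mem y z.
Definition is_succ {M : Type} (mem : M -> M -> Prop) (x s : M) :=
  forall y, mem y s <-> (mem y x \/ y = x).
Definition inductive {M : Type} (mem : M -> M -> Prop) (a : M) :=
  (exists z, is_empty mem z /\ mem z a) /\
  (forall x, mem x a -> exists s, is_succ mem x s /\ mem s a).

Record IKPModel : Type := {
  carrier :> Type;
  mem : carrier -> carrier -> Prop;
  ax_ext : forall x y, (forall z, mem z x <-> mem z y) -> x = y;
  ax_pair : forall a b, exists c, mem a c /\ mem b c;
  ax_union : forall a, exists u, forall x, mem x a -> forall y, mem y x -> mem y u;
  ax_strong_inf : exists w, inductive mem w /\
      (forall b, inductive mem b -> forall x, mem x w -> mem x b);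
  ax_d0_sep : forall (A : form), delta0 A -> forall (e : nat -> carrier) (a : carrier),
      exists b, forall x, mem x b <-> (mem x a /\ eval mem (scons x e) A);
  ax_d0_coll : forall (A : form), delta0 A -> forall (e : nat -> carrier) (a : carrier),
      (forall x, mem x a -> exists y, eval mem (scons y (scons x e)) A) ->
      exists b, forall x, mem x a -> exists y, mem y b /\ eval mem (scons y (scons x e)) A;
  ax_set_ind : forall (A : form) (e : nat -> carrier),
      (forall a, (forall x, mem x a -> eval mem (scons x e) A) -> eval mem (scons a e) A) ->
      forall a, eval mem (scons a e) A
}.

Arguments mem {_}.

Section Notions.
Variable M : IKPModel.

Definition subset (a b : M) := forall z, mem z a -> mem z b.
Definition transitive (a : M) := forall y, mem y a -> subset y a.
Definition ordinal (a : M) := transitive a /\ forall y, mem y a -> transitive y.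

Definition relpl (alpha gamma : M) :=
  forall delta, mem delta gamma -> forall eps, mem eps alpha -> subset eps delta -> mem eps gamma.

Definition PlOrd (alpha : M) :=
  ordinal alpha /\
  forall beta, mem beta alpha -> forall gamma, subset gamma beta -> relpl alpha gamma ->
    mem gamma alpha /\ (forall delta, mem delta alpha -> mem beta delta -> mem gamma delta).
End Notions.

Arguments subset {M}. Arguments transitive {M}. Arguments ordinal {M}.
Arguments relpl {M}. Arguments PlOrd {M}.

(* Main.v *)
Require Import Defs.

Section S.
Variable M : IKPModel.

Lemma key (a : M) : PlOrd a ->
  forall d eps e, mem eps a -> mem d eps -> mem e a -> subset e d -> mem e eps.
Proof.
  intros Pa d.
  pose (A := f_ball 1 (f_imp (f_mem 1 0)
               (f_ball 2 (f_imp (f_ball 0 (f_mem 0 3)) (f_mem 0 1))))).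
  pose proof (ax_set_ind M A (fun _ => a)) as H.
  simpl in H.
  intros eps e Heps Hd He Hs. refine (H _ d eps Heps Hd e He Hs). clear H Heps Hd He Hs eps e d.
  intros d IH eps Heps Hd e He Hed.
  destruct Pa as [[Ta Tel] Pl].
  assert (Hda : mem d a) by (apply (Ta eps Heps); exact Hd).
  assert (Rel : relpl a e).
  { intros d' Hd' e' He' Hsub.
    apply (IH d' (Hed d' Hd') e He Hd' e' He' Hsub). }
  destruct (Pl d Hda e Hed Rel) as [_ H2].
  apply H2; assumption.
Qed.

Lemma elem_plump (a b : M) : PlOrd a -> mem b a -> PlOrd b.
Proof.
  intros Pa Hb.
  pose proof (key a Pa) as K.
  destruct Pa as [[Ta Tel] Pl].
  assert (Tb : transitive b) by (apply Tel; exact Hb).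
  split.
  - split; [exact Tb|]. intros y Hy. apply Tel. apply (Ta b Hb). exact Hy.
  - intros b' Hb' g Hg Rb.
    assert (Hb'a : mem b' a) by (apply (Ta b Hb); exact Hb').
    assert (Ra : relpl a g).
    { intros dl Hdl eps Heps Hsub.
      apply (Rb dl Hdl eps); [|exact Hsub].
      apply (K dl b eps Hb); [|exact Heps|exact Hsub].
      apply (Tb b' Hb'). apply Hg. exact Hdl. }
    destruct (Pl b' Hb'a g Hg Ra) as [H1 H2].
    split.
    + apply H2; assumption.
    + intros dl Hdl Hb'd. apply H2; [|exact Hb'd]. apply (Ta b Hb). exact Hdl.
Qed.

End S.

Theorem proposition2p6 (M : IKPModel) (x : M) :
  (forall beta, mem beta x -> PlOrd beta) ->
  (forall gamma, PlOrd gamma -> (exists beta, mem beta x /\ subset gamma beta) -> mem gamma x) ->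
  PlOrd x.
Proof.
  intros H1 H2.
  assert (Tx : transitive x).
  { intros b Hb y Hy. apply H2.
    - apply (elem_plump M b); auto.
    - exists b. split; [exact Hb|]. destruct (H1 b Hb) as [[Tb _] _]. apply Tb. exact Hy. }
  split.
  - split; [exact Tx|]. intros y Hy. destruct (H1 y Hy) as [[Ty _] _]. exact Ty.
  - intros b Hb g Hg Rx.
    destruct (H1 b Hb) as [[Tb Tbel] Plb].
    assert (Tg : transitive g).
    { intros d Hd z Hz.
      assert (Hdb : mem d b) by (apply Hg; exact Hd).
      apply (Rx d Hd z).
      + apply (Tx b Hb). apply (Tb d Hdb). exact Hz.
      + apply (Tbel d Hdb). exact Hz. }
    assert (Pg : PlOrd g).
    { split.
      - split; [exact Tg|]. intros y Hy. apply Tbel. apply Hg. exact Hy.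
      - intros b' Hb' g' Hg' Rg.
        assert (Hb'b : mem b' b) by (apply Hg; exact Hb').
        assert (Rb : relpl b g').
        { intros dl Hdl eps Heps Hsub.
          apply (Rg dl Hdl eps); [|exact Hsub].
          apply (Rx dl).
          - apply (Tg b' Hb'). apply Hg'. exact Hdl.
          - apply (Tx b Hb). exact Heps.
          - exact Hsub. }
        destruct (Plb b' Hb'b g' Hg' Rb) as [K1 K2].
        split.
        + apply (Rx b' Hb' g').
          * apply (Tx b Hb). exact K1.
          * exact Hg'.
        + intros dl Hdl Hbd. apply K2; [|exact Hbd]. apply Hg. exact Hdl. }
    split.
    + apply H2; [exact Pg|]. exists b. split; assumption.
    + intros dl Hdl Hbd.
      destruct (H1 dl Hdl) as [_ Pld].
      refine (proj1 (Pld b Hbd g Hg _)).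
      intros d Hd eps Heps Hsub.
      apply (Rx d Hd eps); [|exact Hsub].
      apply (Tx dl Hdl). exact Heps.
Qed.
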